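(* Let $(L,\le,\bot,\top)$ be a complete lattice and $(\&_i,\swarrow^i,\nwarrow_i)$, $i=1,\dots,n$, adjoint triples on $L$ with $x\,\&_i\,\top=\top\,\&_i\,x=x$ for all $x\in L$ and all $i$. Let $(A,B,R,\sigma)$ be a normalized context with concept lattice $\mathcal{M}$. If $\mathcal{M}$ has a decomposition into independent blocks $\{K_\mu\}_{\mu\in\Lambda}$, then the sets $\{A_\mu\mid\mu\in\Lambda\}$ form a partition of $A$ and the sets $\{B_\mu\mid\mu\in\Lambda\}$ form a partition of $B$, where, with $K_\mu^*=K_\mu\setminus\{\langle g_\top,f_\bot\rangle,\langle g_\bot,f_\top\rangle\}$, $$A_\mu=\{a\in A\mid\langle\phi_{a,x}^\downarrow,\phi_{a,x}^{\downarrow\uparrow}\rangle\in K_\mu^*\text{ for some }x\in L\},\quad B_\mu=\{b\in B\mid\langle\phi_{b,y}^{\uparrow\downarrow},\phi_{b,y}^{\uparrow}\rangle\in K_\mu^*\text{ for some }y\in L\}.$$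
   Context: An adjoint triple on $L$ is a triple of maps $\&,\swarrow,\nwarrow\colon L\times L\to L$ with $x\le z\swarrow y\iff x\& y\le z\iff y\le z\nwarrow x$. A context is $(A,B,R,\sigma)$ with $A,B$ non-empty, $R\colon A\times B\to L$, $\sigma\colon A\times B\to\{1,\dots,n\}$; normalized means every $a\in A$ has $b_1,b_2$ with $R(a,b_1)\ne\bot$, $R(a,b_2)=\bot$, and every $b\in B$ has $a_1,a_2$ with $R(a_1,b)\ne\bot$, $R(a_2,b)=\bot$. For $g\colon B\to L$, $f\colon A\to L$: $g^\uparrow(a)=\inf_{b}R(a,b)\swarrow^{\sigma(a,b)}g(b)$, $f^\downarrow(b)=\inf_{a}R(a,b)\nwarrow_{\sigma(a,b)}f(a)$. $\mathcal{M}$ is the complete lattice of pairs $\langle g,f\rangle$ with $g^\uparrow=f$, $f^\downarrow=g$, ordered by $g_1\le g_2$ pointwise; top $\langle g_\top,f_\bot\rangle$, bottom $\langle g_\bot,f_\top\rangle$ ($g_\top,g_\bot,f_\top,f_\bot$ constant maps). $\phi_{a,x}\colon A\to L$ takes value $x$ at $a$ and $\bot$ elsewhere; $\phi_{b,y}\colon B\to L$ takes value $y$ at $b$ and $\bot$ elsewhere. For a bounded lattice $(M,\preceq,\bot,\top)$, a block is a sublattice $K\subsetneq M$ with $K\setminus\{\bot,\top\}\ne\varnothing$ and $(\{x\mid k\preceq x\}\cup\{x\mid x\preceq k\})\setminus\{\bot,\top\}\subseteq K$ for all $k\in K\setminus\{\bot,\top\}$. Blocks $K_1,K_2$ are independent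 if $K_1\cap K_2\subseteq\{\bot,\top\}$. A decomposition into independent blocks is a family of pairwise independent blocks whose union is $M$. *)

(* Defs.v *)
From mathcomp Require Import ssreflect ssrfun ssrbool eqtype ssrnat fintype.
From Stdlib Require Import ClassicalEpsilon.

Set Implicit Arguments.
Unset Strict Implicit.
Unset Printing Implicit Defensive.

Record CompleteLattice := {
  cl_car :> Type;
  cl_le : cl_car -> cl_car -> Prop;
  cl_inf : (cl_car -> Prop) -> cl_car;
  cl_refl : forall x, cl_le x x;
  cl_antisym : forall x y, cl_le x y -> cl_le y x -> x = y;
  cl_trans : forall x y z, cl_le x y -> cl_le y z -> cl_le x z;
  cl_inf_lb : forall (S : cl_car -> Prop) x, S x -> cl_le (cl_inf S) x;
  cl_inf_glb : forall (S : cl_car -> Prop) y,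
      (forall x, S x -> cl_le y x) -> cl_le y (cl_inf S)
}.

Definition cl_bot (L : CompleteLattice) : L := cl_inf (fun _ : L => True).
Definition cl_top (L : CompleteLattice) : L := cl_inf (fun _ : L => False).

(* (conj, ld, rd) = (&, swarrow, nwarrow):
   x <= z swarrow y  <->  x & y <= z  <->  y <= z nwarrow x *)
Definition is_adjoint_triple (L : CompleteLattice) (conj ld rd : L -> L -> L) :=
  forall x y z : L,
    (cl_le x (ld z y) <-> cl_le (conj x y) z) /\
    (cl_le (conj x y) z <-> cl_le y (rd z x)).

Section Context.
Variables (L : CompleteLattice) (n : nat) (conj ld rd : 'I_n -> L -> L -> L)
  (A B : Type) (R : A -> B -> L) (sigma : A -> B -> 'I_n).

Definition normalized_context : Prop :=
  (forall a : A, exists b1 b2 : B, R a b1 <> cl_bot L /\ R a b2 = cl_bot L) /\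
  (forall b : B, exists a1 a2 : A, R a1 b <> cl_bot L /\ R a2 b = cl_bot L).

Definition up (g : B -> L) : A -> L :=
  fun a => cl_inf (fun z => exists b : B, z = ld (sigma a b) (R a b) (g b)).
Definition down (f : A -> L) : B -> L :=
  fun b => cl_inf (fun z => exists a : A, z = rd (sigma a b) (R a b) (f a)).

Definition pairT := ((B -> L) * (A -> L))%type.

Definition concept (c : pairT) : Prop := up c.1 = c.2 /\ down c.2 = c.1.

Definition leM (c1 c2 : pairT) : Prop := forall b : B, cl_le (c1.1 b) (c2.1 b).

Definition topM : pairT := (fun _ => cl_top L, fun _ => cl_bot L).
Definition botM : pairT := (fun _ => cl_bot L, fun _ => cl_top L).

Definition is_meetM (c1 c2 m : pairT) : Prop :=
  concept m /\ leM m c1 /\ leM m c2 /\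
  forall d, concept d -> leM d c1 -> leM d c2 -> leM d m.
Definition is_joinM (c1 c2 m : pairT) : Prop :=
  concept m /\ leM c1 m /\ leM c2 m /\
  forall d, concept d -> leM c1 d -> leM c2 d -> leM m d.

Definition sublatticeM (K : pairT -> Prop) : Prop :=
  (forall c, K c -> concept c) /\
  (forall c1 c2 m, K c1 -> K c2 -> is_meetM c1 c2 m -> K m) /\
  (forall c1 c2 m, K c1 -> K c2 -> is_joinM c1 c2 m -> K m).

Definition blockM (K : pairT -> Prop) : Prop :=
  sublatticeM K /\
  (exists c, concept c /\ ~ K c) /\
  (exists k, K k /\ k <> botM /\ k <> topM) /\
  (forall k, K k -> k <> botM -> k <> topM ->
     forall x, concept x -> (leM k x \/ leM x k) -> x <> botM -> x <> topM -> K x).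

Definition independentM (K1 K2 : pairT -> Prop) : Prop :=
  forall c, K1 c -> K2 c -> c = botM \/ c = topM.

Definition decomposition (Lam : Type) (K : Lam -> pairT -> Prop) : Prop :=
  (forall mu, blockM (K mu)) /\
  (forall mu nu, mu <> nu -> independentM (K mu) (K nu)) /\
  (forall c, concept c <-> exists mu, K mu c).

Definition phiA (a : A) (x : L) : A -> L :=
  fun a' => if excluded_middle_informative (a' = a) then x else cl_bot L.
Definition phiB (b : B) (y : L) : B -> L :=
  fun b' => if excluded_middle_informative (b' = b) then y else cl_bot L.

Definition Kstar (K : pairT -> Prop) (c : pairT) : Prop :=
  K c /\ c <> topM /\ c <> botM.

Definition A_mu (K : pairT -> Prop) (a : A) : Prop :=
  exists x : L, Kstar K (down (phiA a x), up (down (phiA a x))).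
Definition B_mu (K : pairT -> Prop) (b : B) : Prop :=
  exists y : L, Kstar K (down (up (phiB b y)), up (phiB b y)).

End Context.

Definition is_partition (X Lam : Type) (P : Lam -> X -> Prop) : Prop :=
  (forall mu, exists x, P mu x) /\
  (forall mu nu x, mu <> nu -> P mu x -> P nu x -> False) /\
  (forall x, exists mu, P mu x).

(* Main.v *)
Require Import Defs.
From mathcomp Require Import ssreflect ssrfun ssrbool eqtype ssrnat fintype.
From Stdlib Require Import FunctionalExtensionality ClassicalEpsilon Classical.

Theorem proposition33 (L : CompleteLattice) (n : nat)
  (conj ld rd : 'I_n -> L -> L -> L)
  (Htriple : forall i, is_adjoint_triple (conj i) (ld i) (rd i))
  (Hunit : forall i (x : L), conj i x (cl_top L) = x /\ conj i (cl_top L) x = x)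
  (A B : Type) (HA : inhabited A) (HB : inhabited B)
  (R : A -> B -> L) (sigma : A -> B -> 'I_n)
  (Hnorm : normalized_context R)
  (Lam : Type) (K : Lam -> pairT L A B -> Prop)
  (Hdec : decomposition ld rd R sigma K) :
  is_partition (fun mu => A_mu ld rd R sigma (K mu)) /\
  is_partition (fun mu => B_mu ld rd R sigma (K mu)).
Proof.
  set le := @cl_le L.
  set bot := cl_bot L. set top := cl_top L.
  have le_bot : forall x, le bot x by move=> x; apply: cl_inf_lb.
  have le_top : forall x, le x top by move=> x; apply: cl_inf_glb.
  have antis : forall x y, le x y -> le y x -> x = y by apply: cl_antisym.
  have trans : forall x y z, le x y -> le y z -> le x z by apply: cl_trans.
  have refl : forall x, le x x by apply: cl_refl.
  have T1 : forall i x y z, le x (ld i z y) <-> le (conj i x y) z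
    by move=> i x y z; case: (Htriple i x y z).
  have T2 : forall i x y z, le y (rd i z x) <-> le (conj i x y) z
    by move=> i x y z; case: (Htriple i x y z) => _ H; split; apply H.
  have conj_bot : forall i y z, le (conj i bot y) z by move=> i y z; apply/T1.
  have conj_botr : forall i x z, le (conj i x bot) z by move=> i x z; apply/T2.
  have rd_bot : forall i z, rd i z bot = top
    by move=> i z; apply: antis; [apply: le_top | apply/T2].
  have ld_bot : forall i z, ld i z bot = top
    by move=> i z; apply: antis; [apply: le_top | apply/T1].
  have rd_top : forall i z, rd i z top = z.
    move=> i z; apply: antis.
    - have := refl (rd i z top); move/T2; by rewrite (proj2 (Hunit _ _)).
    - apply/T2; rewrite (proj2 (Hunit _ _)); apply: refl.
  have ld_top : forall i z, ld i z top = z.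
    move=> i z; apply: antis.
    - have := refl (ld i z top); move/T1; by rewrite (proj1 (Hunit _ _)).
    - apply/T1; rewrite (proj1 (Hunit _ _)); apply: refl.
  have top_rd : forall i z x, le top (rd i z x) -> le x z.
    by move=> i z x /T2; rewrite (proj1 (Hunit _ _)).
  have top_ld : forall i z y, le top (ld i z y) -> le y z.
    by move=> i z y /T1; rewrite (proj2 (Hunit _ _)).
  have le_bot_eq : forall x, le x bot -> x = bot by move=> x h; apply: antis.
  case: Hnorm => NA NB.
  have Lnt : bot <> top.
    case: HA => a; case: (NA a) => b1 [b2 [h1 h2]] e; apply: h1.
    apply: le_bot_eq; rewrite e; apply: le_top.
  have down_ge : forall (f : A -> L) (g : B -> L),
      (forall a b, le (conj (sigma a b) (f a) (g b)) (R a b)) ->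
      forall b, le (g b) (down rd R sigma f b).
    move=> f g H b; apply: cl_inf_glb => z [a ->]; apply/T2; apply: H.
  have up_ge : forall (f : A -> L) (g : B -> L),
      (forall a b, le (conj (sigma a b) (f a) (g b)) (R a b)) ->
      forall a, le (f a) (up ld R sigma g a).
    move=> f g H a; apply: cl_inf_glb => z [b ->]; apply/T1; apply: H.
  have down_G : forall (f : A -> L) (g : B -> L),
      (forall b, le (g b) (down rd R sigma f b)) ->
      forall a b, le (conj (sigma a b) (f a) (g b)) (R a b).
    move=> f g H a b; apply/T2; apply: trans (H b) _; apply: cl_inf_lb; by exists a.
  have up_G : forall (f : A -> L) (g : B -> L),
      (forall a, le (f a) (up ld R sigma g a)) ->
      forall a b, le (conj (sigma a b) (f a) (g b)) (R a b).
    move=> f g H a b; apply/T1; apply: trans (H a) _; apply: cl_inf_lb; by exists b.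
  have down_anti : forall f1 f2 : A -> L, (forall a, le (f1 a) (f2 a)) ->
      forall b, le (down rd R sigma f2 b) (down rd R sigma f1 b).
    move=> f1 f2 H; apply: down_ge => a b.
    have := down_G f2 _ (fun b => refl _) a b.
    move/T1=> h; apply/T1; exact: trans (H a) h.
  have up_anti : forall g1 g2 : B -> L, (forall b, le (g1 b) (g2 b)) ->
      forall a, le (up ld R sigma g2 a) (up ld R sigma g1 a).
    move=> g1 g2 H; apply: up_ge => a b.
    have := up_G _ g2 (fun a => refl _) a b.
    move/T2=> h; apply/T2; exact: trans (H b) h.
  set dn := down rd R sigma in down_ge down_G down_anti *.
  set upp := up ld R sigma in up_ge up_G up_anti *.
  have ext_du : forall f a, le (f a) (upp (dn f) a).
    move=> f; apply: up_ge; apply: down_G => b; apply: refl.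
  have ext_ud : forall g b, le (g b) (dn (upp g) b).
    move=> g; apply: down_ge; apply: up_G => a; apply: refl.
  have dud : forall f, dn (upp (dn f)) = dn f.
    move=> f; apply: functional_extensionality => b; apply: antis.
    - apply: down_anti; apply: ext_du.
    - apply: ext_ud.
  have udu : forall g, upp (dn (upp g)) = upp g.
    move=> g; apply: functional_extensionality => a; apply: antis.
    - apply: up_anti; apply: ext_ud.
    - apply: ext_du.
  have phiA_at : forall (a : A) (x : L), phiA a x a = x.
    by move=> a x; rewrite /phiA; destruct (excluded_middle_informative (a = a)) as [e|h]; [reflexivity | by case: h].
  have phiB_at : forall (b : B) (x : L), phiB b x b = x.
    by move=> b x; rewrite /phiB; destruct (excluded_middle_informative (b = b)) as [e|h]; [reflexivity | by case: h].
  have phiA_le : forall (a : A) (x : L) (f : A -> L), le x (f a) -> forall a', le (phiA a x a') (f a').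
    move=> a x f h a'; rewrite /phiA; destruct (excluded_middle_informative (a' = a)) as [e|e]; cbn; [rewrite e; exact h | apply: le_bot].
  have phiB_le : forall (b : B) (x : L) (f : B -> L), le x (f b) -> forall b', le (phiB b x b') (f b').
    move=> b x f h b'; rewrite /phiB; destruct (excluded_middle_informative (b' = b)) as [e|e]; cbn; [rewrite e; exact h | apply: le_bot].
  have dn_phiA : forall (a : A) (x : L) (b : B), dn (phiA a x) b = rd (sigma a b) (R a b) x.
    move=> a x b; apply: antis.
    - apply: cl_inf_lb; exists a; by rewrite phiA_at.
    - apply: cl_inf_glb => z [a' ->]; rewrite /phiA; destruct (excluded_middle_informative (a' = a)) as [e|e]; cbn; [rewrite e|].
      + apply: refl.
      + rewrite rd_bot; apply: le_top.
  have up_phiB : forall (b : B) (y : L) (a : A), upp (phiB b y) a = ld (sigma a b) (R a b) y.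
    move=> b y a; apply: antis.
    - apply: cl_inf_lb; exists b; by rewrite phiB_at.
    - apply: cl_inf_glb => z [b' ->]; rewrite /phiB; destruct (excluded_middle_informative (b' = b)) as [e|e]; cbn; [rewrite e|].
      + apply: refl.
      + rewrite ld_bot; apply: le_top.
  have up_gtop : upp (fun _ => top) = (fun _ => bot).
    apply: functional_extensionality => a; apply: le_bot_eq.
    case: (NA a) => b1 [b2 [_ h]].
    apply: (trans _ (ld (sigma a b2) (R a b2) top)).
    - apply: cl_inf_lb; by exists b2.
    - rewrite ld_top h; apply: refl.
  have up_gbot : upp (fun _ => bot) = (fun _ => top).
    apply: functional_extensionality => a; apply: antis; first by apply: le_top.
    apply: cl_inf_glb => z [b ->]; rewrite ld_bot; apply: refl.
  have dn_fbot : dn (fun _ => bot) = (fun _ => top).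
    apply: functional_extensionality => b; apply: antis; first by apply: le_top.
    apply: cl_inf_glb => z [a ->]; rewrite rd_bot; apply: refl.
  have appeq : forall (X : Type) (h1 h2 : X -> L) (x : X), h1 = h2 -> h1 x = h2 x.
    by move=> X h1 h2 x ->.
  case: Hdec => Hbl [Hind Hcov].
  have cA : forall a, concept ld rd R sigma (dn (phiA a top), upp (dn (phiA a top))) /\
      (dn (phiA a top), upp (dn (phiA a top))) <> topM L A B /\
      (dn (phiA a top), upp (dn (phiA a top))) <> botM L A B.
    move=> a; case: (NA a) => b1 [b2 [h1 h2]].
    split; first by split; [reflexivity | apply: dud].
    split.
    - move=> /(f_equal fst) /= /(appeq _ _ _ b2); rewrite dn_phiA rd_top h2; exact: Lnt.
    - move=> /(f_equal fst) /= /(appeq _ _ _ b1); rewrite dn_phiA rd_top; exact: h1.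
  have cB : forall b, concept ld rd R sigma (dn (upp (phiB b top)), upp (phiB b top)) /\
      (dn (upp (phiB b top)), upp (phiB b top)) <> topM L A B /\
      (dn (upp (phiB b top)), upp (phiB b top)) <> botM L A B.
    move=> b; case: (NB b) => a1 [a2 [h1 h2]].
    split; first by split; [apply: udu | reflexivity].
    split.
    - move=> /(f_equal snd) /= /(appeq _ _ _ a1); rewrite up_phiB ld_top; exact: h1.
    - move=> /(f_equal snd) /= /(appeq _ _ _ a2); rewrite up_phiB ld_top h2; exact: Lnt.
  split; split; [| split | | split].
  -
    move=> mu; case: (Hbl mu) => [[Kc _] [_ [[[g f] [Kk [kb kt]]] Hcl]]].
    have [Hu Hd] := Kc _ Kk; simpl in Hu, Hd.
    have [a fa] : exists a, f a <> bot.
      apply: NNPP => hn; apply: kt.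
      have ef : f = (fun _ => bot).
        apply: functional_extensionality => a; apply: NNPP => h; apply: hn; by exists a.
      have eg : g = (fun _ => top) by rewrite -Hd ef; exact: dn_fbot.
      by rewrite ef eg.
    exists a, (f a); rewrite /Kstar.
    set c := (dn (phiA a (f a)), upp (dn (phiA a (f a)))).
    have cc : concept ld rd R sigma c by split; [reflexivity | apply: dud].
    have kc : leM (g, f) c.
      move=> b /=; rewrite -Hd; apply: down_anti; apply: phiA_le; apply: refl.
    have ct : c <> topM L A B.
      case: (NA a) => b1 [b2 [_ h2]].
      move=> /(f_equal fst) /= /(appeq _ _ _ b2); rewrite dn_phiA h2 => e.
      apply: fa; apply: le_bot_eq; apply: (top_rd (sigma a b2)); rewrite e; apply: refl.
    have cb : c <> botM L A B.
      move=> /(f_equal fst) /= e; apply: kb.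
      have eg : g = (fun _ => bot).
        apply: functional_extensionality => b; apply: le_bot_eq.
        have := kc b; by rewrite /= e.
      rewrite -Hu eg; have := up_gbot; rewrite /upp => ->; reflexivity.
    split; last by split.
    exact: (Hcl _ Kk kb kt c cc (or_introl kc) cb ct).
  -
    move=> mu nu a ne [x [Kx [xt xb]]] [x' [Kx' [xt' xb']]].
    case: (cA a) => cc [ct cb].
    have lc : forall x, leM (dn (phiA a top), upp (dn (phiA a top)))
                           (dn (phiA a x), upp (dn (phiA a x))).
      move=> y b /=; apply: down_anti; apply: phiA_le; rewrite phiA_at; apply: le_top.
    have cx : forall x, concept ld rd R sigma (dn (phiA a x), upp (dn (phiA a x))).
      by move=> y; split; [reflexivity | apply: dud].
    case: (Hbl mu) => [_ [_ [_ Hcl]]]; case: (Hbl nu) => [_ [_ [_ Hcl']]].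
    have H1 := Hcl _ Kx xb xt _ cc (or_intror (lc x)) cb ct.
    have H2 := Hcl' _ Kx' xb' xt' _ cc (or_intror (lc x')) cb ct.
    by case: (Hind mu nu ne _ H1 H2).
  -
    move=> a; case: (cA a) => cc [ct cb].
    case: ((proj1 (Hcov _)) cc) => mu Kc.
    by exists mu, top.
  -
    move=> mu; case: (Hbl mu) => [[Kc _] [_ [[[g f] [Kk [kb kt]]] Hcl]]].
    have [Hu Hd] := Kc _ Kk; simpl in Hu, Hd.
    have [b gb] : exists b, g b <> bot.
      apply: NNPP => hn; apply: kb.
      have eg : g = (fun _ => bot).
        apply: functional_extensionality => b; apply: NNPP => h; apply: hn; by exists b.
      have ef : f = (fun _ => top) by rewrite -Hu eg; exact: up_gbot.
      by rewrite ef eg.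
    exists b, (g b); rewrite /Kstar.
    set c := (dn (upp (phiB b (g b))), upp (phiB b (g b))).
    have cc : concept ld rd R sigma c by split; [apply: udu | reflexivity].
    have kc : leM c (g, f).
      have egg : dn (upp g) = g by rewrite /dn /upp Hu Hd.
      move=> b' /=; rewrite -{2}egg; apply: down_anti; apply: up_anti.
      apply: phiB_le; apply: refl.
    have cb : c <> botM L A B.
      case: (NB b) => a1 [a2 [_ h2]].
      move=> /(f_equal snd) /= /(appeq _ _ _ a2); rewrite up_phiB h2 => e.
      apply: gb; apply: le_bot_eq; apply: (top_ld (sigma a2 b)); rewrite e; apply: refl.
    have ct : c <> topM L A B.
      move=> /(f_equal fst) /= e; apply: kt.
      have eg : g = (fun _ => top).
        apply: functional_extensionality => b'; apply: antis; first by apply: le_top.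
        have := kc b'; by rewrite /= e.
      rewrite -Hu eg; have := up_gtop; rewrite /upp => ->; reflexivity.
    split; last by split.
    exact: (Hcl _ Kk kb kt c cc (or_intror kc) cb ct).
  -
    move=> mu nu b ne [x [Kx [xt xb]]] [x' [Kx' [xt' xb']]].
    case: (cB b) => cc [ct cb].
    have lc : forall y, leM (dn (upp (phiB b y)), upp (phiB b y))
                           (dn (upp (phiB b top)), upp (phiB b top)).
      move=> y b' /=; apply: down_anti; apply: up_anti; apply: phiB_le;
        rewrite phiB_at; apply: le_top.
    case: (Hbl mu) => [_ [_ [_ Hcl]]]; case: (Hbl nu) => [_ [_ [_ Hcl']]].
    have H1 := Hcl _ Kx xb xt _ cc (or_introl (lc x)) cb ct.
    have H2 := Hcl' _ Kx' xb' xt' _ cc (or_introl (lc x')) cb ct.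
    by case: (Hind mu nu ne _ H1 H2).
  -
    move=> b; case: (cB b) => cc [ct cb].
    case: ((proj1 (Hcov _)) cc) => mu Kc.
    by exists mu, top.
Qed.
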